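(* Let $n\ge 2$, $G=Sp(n+1)$, $K=\{\mathrm{diag}(B,q):B\in Sp(n),q\in Sp(1)\}$ and $N=\{\mathrm{diag}(A,q_1,q_2):A\in Sp(n-1),q_1,q_2\in Sp(1)\}$. Let $\Delta G\times K\times N$ act on $G\times G$ by $(g,k,h)\cdot(g_1,g_2)=(gg_1k^{-1},gg_2h^{-1})$. For $g\in G$ let $v(g)\in S^{4n+3}\subseteq\mathbb{H}^{n+1}$ be the last column of $g$, let $v_0(g)\in\mathbb{H}^{n-1}$ be the vector of its first $n-1$ entries, $v_n(g)$ its second-to-last entry and $v_{n+1}(g)$ its last entry. Then $(g_1,g_2)$ and $(h_1,h_2)$ lie in the same orbit if and only if $|v_i(g_2^{-1}g_1)|=|v_i(h_2^{-1}h_1)|$ for each $i\in\{0,n,n+1\}$.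
   Context: $Sp(m)$ denotes the group of $m\times m$ quaternionic unitary matrices; $|\cdot|$ is the standard norm on $\mathbb{H}^k$. *)

(* Defs.v *)
From HB Require Import structures.
From mathcomp Require Import all_boot all_order all_algebra.
From mathcomp Require Import ring.
From mathcomp Require Import reals.
Set Implicit Arguments. Unset Strict Implicit. Unset Printing Implicit Defensive.
Import Order.TTheory GRing.Theory Num.Theory.
Local Open Scope ring_scope.

Record quat (R : Type) := Quat { qa : R; qb : R; qc : R; qd : R }.

Section Quaternions.
Variable R : rcfType.

Definition quat2tup (q : quat R) := (qa q, qb q, qc q, qd q).
Definition tup2quat (t : R * R * R * R) :=
  let: (a, b, c, d) := t in Quat a b c d.
Lemma quat2tupK : cancel quat2tup tup2quat. Proof. by case. Qed.

HB.instance Definition _ := Choice.copy (quat R) (can_type quat2tupK).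

Definition qzero : quat R := Quat 0 0 0 0.
Definition qone : quat R := Quat 1 0 0 0.
Definition qadd (p q : quat R) :=
  Quat (qa p + qa q) (qb p + qb q) (qc p + qc q) (qd p + qd q).
Definition qopp (p : quat R) := Quat (- qa p) (- qb p) (- qc p) (- qd p).
(* Hamilton product: i^2 = j^2 = k^2 = ijk = -1 *)
Definition qmul (p q : quat R) :=
  Quat (qa p * qa q - qb p * qb q - qc p * qc q - qd p * qd q)
       (qa p * qb q + qb p * qa q + qc p * qd q - qd p * qc q)
       (qa p * qc q - qb p * qd q + qc p * qa q + qd p * qb q)
       (qa p * qd q + qb p * qc q - qc p * qb q + qd p * qa q).

Lemma qaddA : associative qadd.
Proof. by move=> [????] [????] [????]; rewrite /qadd /=; congr Quat; ring. Qed.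
Lemma qaddC : commutative qadd.
Proof. by move=> [????] [????]; rewrite /qadd /=; congr Quat; ring. Qed.
Lemma qadd0 : left_id qzero qadd.
Proof. by move=> [????]; rewrite /qadd /=; congr Quat; ring. Qed.
Lemma qaddN : left_inverse qzero qopp qadd.
Proof. by move=> [????]; rewrite /qadd /=; congr Quat; ring. Qed.

HB.instance Definition _ := GRing.isZmodule.Build (quat R) qaddA qaddC qadd0 qaddN.

Lemma qmulA : associative qmul.
Proof. by move=> [????] [????] [????]; rewrite /qmul /=; congr Quat; ring. Qed.
Lemma qmul1 : left_id qone qmul.
Proof. by move=> [????]; rewrite /qmul /=; congr Quat; ring. Qed.
Lemma qmulr1 : right_id qone qmul.
Proof. by move=> [????]; rewrite /qmul /=; congr Quat; ring. Qed.
Lemma qmulDl : left_distributive qmul qadd.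
Proof.
by move=> [????] [????] [????]; rewrite /qmul /qadd /=; congr Quat; ring.
Qed.
Lemma qmulDr : right_distributive qmul qadd.
Proof.
by move=> [????] [????] [????]; rewrite /qmul /qadd /=; congr Quat; ring.
Qed.
Lemma qone_neq0 : qone != 0.
Proof. by apply/eqP => -[] /eqP; rewrite oner_eq0. Qed.

HB.instance Definition _ :=
  GRing.Zmodule_isNzRing.Build (quat R) qmulA qmul1 qmulr1 qmulDl qmulDr qone_neq0.

Definition qconj (q : quat R) := Quat (qa q) (- qb q) (- qc q) (- qd q).
Definition qnorm2 (q : quat R) : R :=
  qa q ^+ 2 + qb q ^+ 2 + qc q ^+ 2 + qd q ^+ 2.
Definition qabs (q : quat R) : R := Num.sqrt (qnorm2 q).

Definition qadj m n (A : 'M[quat R]_(m, n)) : 'M[quat R]_(n, m) :=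
  map_mx qconj A^T.

(* Sp(m): the m x m quaternionic unitary matrices, A A^* = 1.  For such
   A, A^* is the (two-sided) inverse A^{-1}. *)
Definition is_Sp m (A : 'M[quat R]_m) : Prop := A *m qadj A = 1%:M.

Definition in_K n (k : 'M[quat R]_n.+1) : Prop :=
  exists (B : 'M[quat R]_n) (q : 'M[quat R]_1),
    is_Sp B /\ is_Sp q /\
    k = castmx (addn1 n, addn1 n) (block_mx B 0 0 q).

(* N = { diag(A, q1, q2) : A in Sp(n-1), q1, q2 in Sp(1) } inside Sp(n+1)
   (for n >= 1, so that (n-1)+1+1 = n+1) *)
Definition in_N n (h : 'M[quat R]_n.+1) : Prop :=
  exists (e : (n.-1 + 1 + 1 = n.+1)%N)
         (A : 'M[quat R]_n.-1) (q1 q2 : 'M[quat R]_1),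
    is_Sp A /\ is_Sp q1 /\ is_Sp q2 /\
    h = castmx (e, e) (block_mx (block_mx A 0 0 q1) 0 0 q2).

(* (h1,h2) lies in the orbit of (g1,g2) under Delta G x K x N acting by
   (g,k,h).(g1,g2) = (g g1 k^{-1}, g g2 h^{-1}); for unitary k, h the
   inverse is the conjugate transpose. *)
Definition same_orbit n (p1 p2 : 'M[quat R]_n.+1 * 'M[quat R]_n.+1) : Prop :=
  exists (g k h : 'M[quat R]_n.+1),
    is_Sp g /\ in_K k /\ in_N h /\
    p2.1 = g *m p1.1 *m qadj k /\ p2.2 = g *m p1.2 *m qadj h.

(* v(g) = last column of g in H^{n+1}; entries indexed 0..n (0-based). *)
Definition vlast n (g : 'M[quat R]_n.+1) : 'cV[quat R]_n.+1 := col ord_max g.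

Definition norm_v0 n (g : 'M[quat R]_n.+1) : R :=
  Num.sqrt (\sum_(i < n.+1 | (i < n.-1)%N) qabs (vlast g i 0) ^+ 2).
(* |v_n(g)|: modulus of the second-to-last entry (0-based index n-1) *)
Definition norm_vn n (g : 'M[quat R]_n.+1) : R :=
  qabs (vlast g (inord n.-1) 0).
Definition norm_vlast n (g : 'M[quat R]_n.+1) : R :=
  qabs (vlast g ord_max 0).

End Quaternions.

(* Main.v *)
Require Import Defs.
From HB Require Import structures.
From mathcomp Require Import all_boot all_order all_algebra.
From mathcomp Require Import ring lra.
From mathcomp Require Import reals.
Set Implicit Arguments. Unset Strict Implicit. Unset Printing Implicit Defensive.
Import Order.TTheory GRing.Theory Num.Theory.
Local Open Scope ring_scope.

Section QBasics.
Variable R : rcfType.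
Local Notation Q := (quat R).

Definition qr (r : R) : Q := Quat r 0 0 0.

Lemma qmulE (p q : Q) : p * q = qmul p q. Proof. by []. Qed.
Lemma qaddE (p q : Q) : p + q = qadd p q. Proof. by []. Qed.
Lemma qoppE (p : Q) : - p = qopp p. Proof. by []. Qed.
Lemma q0E : (0 : Q) = Quat 0 0 0 0. Proof. by []. Qed.
Lemma q1E : (1 : Q) = Quat 1 0 0 0. Proof. by []. Qed.

Ltac qs := rewrite ?qmulE ?qaddE ?qoppE ?q0E ?q1E /qmul /qadd /qopp /qconj /qr /qnorm2 /=.

Lemma qconjK (p : Q) : qconj (qconj p) = p.
Proof. by case: p => a b c d; qs; congr Quat; ring. Qed.
Lemma qconjD (p q : Q) : qconj (p + q) = qconj p + qconj q.
Proof. by case: p => a b c d; case: q => ????; qs; congr Quat; ring. Qed.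
Lemma qconjN (p : Q) : qconj (- p) = - qconj p.
Proof. by case: p => a b c d; qs; congr Quat; ring. Qed.
Lemma qconj0 : qconj (0 : Q) = 0.
Proof. by qs; congr Quat; ring. Qed.
Lemma qconj1 : qconj (1 : Q) = 1.
Proof. by qs; congr Quat; ring. Qed.
Lemma qconjM (p q : Q) : qconj (p * q) = qconj q * qconj p.
Proof. by case: p => a b c d; case: q => ????; qs; congr Quat; ring. Qed.
Lemma qrM (r s : R) : qr (r * s) = qr r * qr s.
Proof. by qs; congr Quat; ring. Qed.
Lemma qrD (r s : R) : qr (r + s) = qr r + qr s.
Proof. by qs; congr Quat; ring. Qed.
Lemma qrN (r : R) : qr (- r) = - qr r.
Proof. by qs; congr Quat; ring. Qed.
Lemma qr0 : qr 0 = 0. Proof. by []. Qed.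
Lemma qr1 : qr 1 = 1. Proof. by []. Qed.
Lemma qconj_qr r : qconj (qr r) = qr r.
Proof. by qs; congr Quat; ring. Qed.
Lemma qrC r (p : Q) : qr r * p = p * qr r.
Proof. by case: p => a b c d; qs; congr Quat; ring. Qed.
Lemma qr_inj : injective qr.
Proof. by move=> r s [->]. Qed.
Lemma qmul_conj (p : Q) : p * qconj p = qr (qnorm2 p).
Proof. by case: p => a b c d; qs; congr Quat; ring. Qed.
Lemma qconj_mul (p : Q) : qconj p * p = qr (qnorm2 p).
Proof. by case: p => a b c d; qs; congr Quat; ring. Qed.
Lemma qnorm2M (p q : Q) : qnorm2 (p * q) = qnorm2 p * qnorm2 q.
Proof. by case: p => a b c d; case: q => ????; qs; ring. Qed.
Lemma qnorm2_ge0 (p : Q) : 0 <= qnorm2 p.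
Proof. by case: p => a b c d; qs; rewrite !addr_ge0 // sqr_ge0. Qed.
Lemma qnorm2_conj (p : Q) : qnorm2 (qconj p) = qnorm2 p.
Proof. by case: p => a b c d; qs; ring. Qed.
Lemma qnorm2_qr r : qnorm2 (qr r) = r ^+ 2.
Proof. by qs; ring. Qed.
Lemma qnorm2_eq0 (p : Q) : qnorm2 p = 0 -> p = 0.
Proof.
case: p => a b c d; rewrite /qnorm2 /= => H.
have ha : a = 0 by apply/eqP; rewrite -sqrf_eq0; apply/eqP; nra.
have hb : b = 0 by apply/eqP; rewrite -sqrf_eq0; apply/eqP; nra.
have hc : c = 0 by apply/eqP; rewrite -sqrf_eq0; apply/eqP; nra.
have hd : d = 0 by apply/eqP; rewrite -sqrf_eq0; apply/eqP; nra.
by rewrite ha hb hc hd.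
Qed.
Lemma qnorm2_0 : qnorm2 (0 : Q) = 0. Proof. by qs; ring. Qed.
Lemma qnorm2_1 : qnorm2 (1 : Q) = 1. Proof. by qs; ring. Qed.
Lemma qabs2 (p : Q) : qabs p ^+ 2 = qnorm2 p.
Proof. by rewrite /qabs sqr_sqrtr // qnorm2_ge0. Qed.
Lemma qabs_eq (p q : Q) : qabs p = qabs q -> qnorm2 p = qnorm2 q.
Proof. by move=> h; rewrite -!qabs2 h. Qed.

Lemma qconj_sum I (r : seq I) P (F : I -> Q) :
  qconj (\sum_(i <- r | P i) F i) = \sum_(i <- r | P i) qconj (F i).
Proof. exact: (big_morph _ qconjD qconj0). Qed.
Lemma qr_sum I (r : seq I) P (F : I -> R) :
  qr (\sum_(i <- r | P i) F i) = \sum_(i <- r | P i) qr (F i).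
Proof. exact: (big_morph _ qrD qr0). Qed.

Lemma qunit_move (a b : Q) : qnorm2 a = qnorm2 b ->
  exists d : Q, d * qconj d = 1 /\ d * a = b.
Proof.
move=> hab; have [a0|an0] := eqVneq a 0.
  exists 1; rewrite qconj1 mulr1 mul1r; split => //.
  by rewrite a0; apply/esym/qnorm2_eq0; rewrite -hab a0 qnorm2_0.
have hN : qnorm2 a != 0.
  by apply/eqP => /qnorm2_eq0 /eqP; rewrite (negPf an0).
exists (b * qconj a * qr (qnorm2 a)^-1); split.
  rewrite !qconjM qconjK qconj_qr.
  have -> : b * qconj a * qr (qnorm2 a)^-1 * (qr (qnorm2 a)^-1 * (a * qconj b))
     = b * (qr (qnorm2 a)^-1 * (qconj a * a) * qr (qnorm2 a)^-1) * qconj b.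
    rewrite !mulrA; congr (_ * _); rewrite -!mulrA; congr (_ * _).
    move: (qnorm2 a)^-1 => t; case: a {hab an0 hN} => ????; qs; congr Quat; ring.
  rewrite qconj_mul -!qrM -mulrA qrC mulrA qmul_conj -qrM -hab.
  by rewrite mulVf // mul1r mulfV // qr1.
have -> : b * qconj a * qr (qnorm2 a)^-1 * a = b * (qr (qnorm2 a)^-1 * (qconj a * a)).
  by move: (qnorm2 a)^-1 => t; case: a {hab an0 hN} => ????; case: b => ????; qs; congr Quat; ring.
by rewrite qconj_mul -qrM mulVf // qr1 mulr1.
Qed.

End QBasics.

Section QMat.
Variable R : rcfType.
Local Notation Q := (quat R).

Lemma qadjE m n (A : 'M[Q]_(m, n)) i j : qadj A i j = qconj (A j i).
Proof. by rewrite /qadj !mxE. Qed.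

Lemma qadjK m n (A : 'M[Q]_(m, n)) : qadj (qadj A) = A.
Proof. by apply/matrixP => i j; rewrite !qadjE qconjK. Qed.

Lemma qadj_mul m n p (A : 'M[Q]_(m, n)) (B : 'M[Q]_(n, p)) :
  qadj (A *m B) = qadj B *m qadj A.
Proof.
apply/matrixP => i j; rewrite qadjE !mxE qconj_sum.
by apply: eq_bigr => k _; rewrite qconjM !qadjE.
Qed.

Lemma qadj_scalar n (x : Q) : qadj (x%:M : 'M_n) = (qconj x)%:M.
Proof.
apply/matrixP => i j; rewrite qadjE !mxE .
by rewrite eq_sym; case: eqP => _; rewrite ?mulr1n ?mulr0n ?qconj0.
Qed.

Lemma qadj1 n : qadj (1%:M : 'M[Q]_n) = 1%:M.
Proof. by rewrite qadj_scalar qconj1. Qed.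

Lemma qadjD m n (A B : 'M[Q]_(m, n)) : qadj (A + B) = qadj A + qadj B.
Proof. by apply/matrixP => i j; rewrite /qadj !mxE qconjD. Qed.
Lemma qadjN m n (A : 'M[Q]_(m, n)) : qadj (- A) = - qadj A.
Proof. by apply/matrixP => i j; rewrite /qadj !mxE qconjN. Qed.

Lemma Sp_mul n (A B : 'M[Q]_n) : is_Sp A -> is_Sp B -> is_Sp (A *m B).
Proof.
rewrite /is_Sp => hA hB; rewrite qadj_mul mulmxA -(mulmxA A) hB mulmx1 //.
Qed.

Lemma Sp_adj n (A : 'M[Q]_n) : qadj A *m A = 1%:M -> is_Sp (qadj A).
Proof. by rewrite /is_Sp qadjK. Qed.

Definition vn2 p (v : 'cV[Q]_p) : R := \sum_i qnorm2 (v i 0).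

Lemma vn2_ge0 p (v : 'cV[Q]_p) : 0 <= vn2 v.
Proof. by apply: sumr_ge0 => i _; apply: qnorm2_ge0. Qed.

Lemma adj_vv p (v : 'cV[Q]_p) : qadj v *m v = (qr (vn2 v))%:M.
Proof.
apply/matrixP => i j; rewrite !ord1 !mxE /= mulr1n /vn2 qr_sum.
by apply: eq_bigr => k _; rewrite qadjE qconj_mul.
Qed.

Lemma vn2_adj p (v : 'cV[Q]_p) : qr (vn2 v) = (qadj v *m v) 0 0.
Proof. by rewrite adj_vv mxE mulr1n. Qed.

Lemma vn2_unitary p (A : 'M[Q]_p) (v : 'cV[Q]_p) :
  qadj A *m A = 1%:M -> vn2 (A *m v) = vn2 v.
Proof.
move=> hA; apply: qr_inj; rewrite !vn2_adj qadj_mul -mulmxA (mulmxA (qadj A)).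
by rewrite hA mul1mx.
Qed.

End QMat.

Section QRep.
Variable R : rcfType.
Local Notation Q := (quat R).

Definition qcoord (x : Q) (t : 'I_4) : R :=
  match val t with 0 => qa x | 1 => qb x | 2 => qc x | _ => qd x end.
Definition qbas (t : 'I_4) : Q :=
  match val t with 0 => Quat 1 0 0 0 | 1 => Quat 0 1 0 0
  | 2 => Quat 0 0 1 0 | _ => Quat 0 0 0 1 end.
Definition Lq (p : Q) (s t : 'I_4) : R := qcoord (p * qbas t) s.

Lemma Lmul p q s t : \sum_(u < 4) Lq p s u * Lq q u t = Lq (p * q) s t.
Proof.
rewrite !big_ord_recr big_ord0 /= add0r.
case: p => ????; case: q => ????.
case: s => [[|[|[|[|s]]]] Hs] //; case: t => [[|[|[|[|t]]]] Ht] //;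
rewrite /Lq /qcoord /qbas /= ?qmulE /qmul /=; ring.
Qed.

Lemma LD p q s t : Lq (p + q) s t = Lq p s t + Lq q s t.
Proof.
case: p => ????; case: q => ????.
case: s => [[|[|[|[|s]]]] Hs] //; case: t => [[|[|[|[|t]]]] Ht] //;
rewrite /Lq /qcoord /qbas /= ?qmulE ?qaddE /qmul /qadd /=; ring.
Qed.

Lemma L0 s t : Lq 0 s t = 0.
Proof.
case: s => [[|[|[|[|s]]]] Hs] //; case: t => [[|[|[|[|t]]]] Ht] //;
rewrite /Lq /qcoord /qbas /= ?qmulE /qmul /=; ring.
Qed.

Lemma L1 s t : Lq 1 s t = (s == t)%:R.
Proof.
case: s => [[|[|[|[|s]]]] Hs] //; case: t => [[|[|[|[|t]]]] Ht] //;
rewrite /Lq /qcoord /qbas /= ?qmulE /qmul /=; ring.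
Qed.

Lemma Lcoord x s : Lq x s 0 = qcoord x s.
Proof. by rewrite /Lq /qbas /= mulr1. Qed.

Lemma quat_ext (x y : Q) : (forall t, qcoord x t = qcoord y t) -> x = y.
Proof.
case: x => a b c d; case: y => a' b' c' d' h.
have := h 0; have := h 1; have := h 2; have := h 3.
by rewrite /qcoord /= => -> -> -> ->.
Qed.

Lemma Lsum I (r : seq I) P (F : I -> Q) s t :
  Lq (\sum_(i <- r | P i) F i) s t = \sum_(i <- r | P i) Lq (F i) s t.
Proof.
elim/big_rec2: _ => [|i y1 y2 _ <-]; first exact: L0.
by rewrite LD.
Qed.

Variable n : nat.
Local Notation T := ('I_n * 'I_4)%type.
Local Notation N := #|{: T}|.
Definition ix (i : 'I_N) : T := enum_val i.

Definition rho (A : 'M[Q]_n) : 'M[R]_N :=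
  \matrix_(i, j) Lq (A (ix i).1 (ix j).1) (ix i).2 (ix j).2.

Lemma rho_mul (A B : 'M[Q]_n) : rho (A *m B) = rho A *m rho B.
Proof.
apply/matrixP => i j; rewrite !mxE Lsum.
rewrite /rho.
under [RHS]eq_bigr do rewrite !mxE.
rewrite /ix -(big_enum_val (A := {: T}) (fun k => Lq (A (enum_val i).1 k.1) (enum_val i).2 k.2 *
     Lq (B k.1 (enum_val j).1) k.2 (enum_val j).2)).
rewrite -(pair_big xpredT xpredT (fun a b => Lq (A (enum_val i).1 a) (enum_val i).2 b *
     Lq (B a (enum_val j).1) b (enum_val j).2)) /=.
apply: eq_bigr => a _; by rewrite Lmul.
Qed.

Lemma rho1 : rho 1%:M = 1%:M.
Proof.
apply/matrixP => i j; rewrite !mxE.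
have -> : (i == j) = ((ix i).1 == (ix j).1) && ((ix i).2 == (ix j).2).
  by rewrite -xpair_eqE -surjective_pairing -surjective_pairing
     (inj_eq enum_val_inj).
by case: eqP => _; rewrite ?mulr1n ?mulr0n ?L1 ?L0.
Qed.

Lemma rho_inj (X Y : 'M[Q]_n) : rho X = rho Y -> X = Y.
Proof.
move=> h; apply/matrixP => a b; apply: quat_ext => t.
move/matrixP: h => /(_ (enum_rank (a, t)) (enum_rank (b, (0 : 'I_4)))).
by rewrite !mxE /ix !enum_rankK /= !Lcoord.
Qed.

End QRep.

Lemma Sp_left (R : rcfType) n (A : 'M[quat R]_n) :
  is_Sp A -> qadj A *m A = 1%:M.
Proof.
rewrite /is_Sp => h; apply: rho_inj; rewrite rho_mul rho1.
by apply: mulmx1C; rewrite -rho_mul h rho1.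
Qed.


Section House.
Variable R : rcfType.
Local Notation Q := (quat R).
Local Notation S r := ((qr r)%:M : 'M[Q]_1).

Lemma SM a b : S a *m S b = S (a * b).
Proof. by rewrite -scalar_mxM qrM. Qed.
Lemma SD a b : S a + S b = S (a + b).
Proof. by rewrite -raddfD qrD. Qed.
Lemma SB a b : S a - S b = S (a - b).
Proof. by rewrite -raddfB qrD qrN. Qed.
Lemma S_inj a b : S a = S b -> a = b.
Proof. by move/matrixP/(_ 0 0); rewrite !mxE !mulr1n; apply: qr_inj. Qed.
Lemma qadjS a : qadj (S a) = S a.
Proof. by rewrite qadj_scalar qconj_qr. Qed.
Lemma S1 : S 1 = 1%:M. Proof. by rewrite qr1. Qed.

Lemma Sp1 p : is_Sp (1%:M : 'M[Q]_p).
Proof. by rewrite /is_Sp qadj1 mulmx1. Qed.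

Lemma vn2_eq0 p (y : 'cV[Q]_p) : vn2 y = 0 -> y = 0.
Proof.
move=> h; apply/matrixP => i j; rewrite ord1 mxE; apply: qnorm2_eq0.
by apply: (psumr_eq0P (fun k _ => qnorm2_ge0 (y k 0)) h).
Qed.

Lemma house p (v w : 'cV[Q]_p) r : vn2 v = vn2 w ->
  qadj w *m v = S r -> exists H, is_Sp H /\ H *m v = w.
Proof.
move=> hn hr.
set y := v - w.
have hvw : qadj v *m w = S r by have := congr1 (@qadj _ _ _) hr; rewrite qadj_mul qadjK qadjS.
have yv : qadj y *m v = S (vn2 v - r).
  by rewrite /y qadjD qadjN mulmxDl mulNmx adj_vv hr SB.
have yy : S (vn2 y) = S (2 * (vn2 v - r)).
  rewrite -adj_vv /y qadjD qadjN !mulmxDl !mulmxDr !mulNmx !mulmxN !adj_vv hr hvw.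
  rewrite opprK; apply/matrixP => i j; rewrite !ord1 !mxE !mulr1n -hn.
  by rewrite -!qrN -!qrD; congr qr; ring.
move/S_inj: yy => yy.
have [y0|yn0] := eqVneq (vn2 y) 0.
  exists 1%:M; split; first exact: Sp1.
  by move/vn2_eq0: y0; rewrite mul1mx /y => /eqP; rewrite subr_eq0 => /eqP.
set c := 2 / vn2 y.
set P := y *m S c *m qadj y.
have hP : qadj P = P by rewrite /P !qadj_mul qadjK qadjS mulmxA.
have PP : P *m P = P + P.
  have -> : P *m P = y *m (S c *m (qadj y *m y) *m S c) *m qadj y by rewrite /P !mulmxA.
  have -> : P + P = y *m (S c + S c) *m qadj y by rewrite mulmxDr mulmxDl.
  rewrite adj_vv !SM SD.
  have -> : c * vn2 y * c = c + c by rewrite /c; field.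
  by [].
exists (1%:M - P); split.
  rewrite /is_Sp qadjD qadjN qadj1 hP !mulmxBl !mulmxBr !mul1mx !mulmx1 PP.
  by rewrite opprB addrK subrK.
rewrite mulmxBl mul1mx.
have -> : P *m v = y *m (S c *m (qadj y *m v)) by rewrite /P !mulmxA.
rewrite yv SM.
have -> : c * (vn2 v - r) = 1.
  by rewrite /c yy; field; apply/eqP => h; move: yn0; rewrite yy h mulr0 eqxx.
by rewrite S1 mulmx1 /y opprB addrC subrK.
Qed.

End House.

Section Trans.
Variable R : rcfType.
Local Notation Q := (quat R).
Local Notation S r := ((qr r)%:M : 'M[Q]_1).

Definition ev p (c : Q) : 'cV[Q]_p.+1 := \col_i (if i == ord0 then c else 0).

Lemma vn2_ev p c : vn2 (ev p c) = qnorm2 c.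
Proof.
rewrite /vn2 big_ord_recl big1 ?addr0; first by rewrite mxE eqxx.
by move=> i _; rewrite mxE eq_sym (negPf (neq_lift _ _)) qnorm2_0.
Qed.

Lemma adj_ev p c (v : 'cV[Q]_p.+1) : qadj (ev p c) *m v = (qconj c * v ord0 0)%:M.
Proof.
apply/matrixP => i j; rewrite !ord1 !mxE mulr1n big_ord_recl big1 ?addr0.
  by rewrite ?qadjE !mxE eqxx.
by move=> k _; rewrite ?qadjE !mxE eq_sym (negPf (neq_lift _ _)) qconj0 mul0r.
Qed.

Lemma to_e p (v : 'cV[Q]_p.+1) : exists c, qnorm2 c = vn2 v /\
  exists r, qadj (ev p c) *m v = S r.
Proof.
set s := Num.sqrt (vn2 v).
have hs : s ^+ 2 = vn2 v by rewrite sqr_sqrtr // vn2_ge0.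
have [v0|vn0] := eqVneq (v ord0 0) 0.
  exists (qr s); split; first by rewrite qnorm2_qr.
  by exists 0; rewrite adj_ev v0 mulr0.
have hN : qnorm2 (v ord0 0) != 0.
  by apply/eqP => /qnorm2_eq0 /eqP; rewrite (negPf vn0).
set t := s / qabs (v ord0 0).
exists (v ord0 0 * qr t); split.
  rewrite qnorm2M qnorm2_qr /t expr_div_n qabs2 -hs; field; exact: hN.
exists (t * qnorm2 (v ord0 0)).
by rewrite adj_ev qconjM qconj_qr -mulrA qconj_mul -qrM.
Qed.

Lemma Sp_diag p (f : 'I_p -> Q) : (forall i, f i * qconj (f i) = 1) ->
  is_Sp (diag_mx (\row_i f i)).
Proof.
move=> hf; rewrite /is_Sp mul_diag_mx; apply/matrixP => i j.
rewrite !mxE ?qadjE ?mxE .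
case: eqP => [->|hij]; rewrite ?mulr1n ?mulr0n ?qconj0 ?mulr0; first by rewrite hf eqxx.
by rewrite eq_sym; move/eqP/negPf: hij => ->.
Qed.

Lemma trans_vec p (v w : 'cV[Q]_p) : vn2 v = vn2 w ->
  exists A, is_Sp A /\ A *m v = w.
Proof.
case: p v w => [|p] v w h.
  by exists 1%:M; split; [exact: Sp1 | rewrite mul1mx !flatmx0].
have [c [hc [r hr]]] := to_e v.
have [c' [hc' [r' hr']]] := to_e w.
have [H1 [sH1 eH1]] := house (esym (etrans (vn2_ev p c) hc)) hr.
have [H2 [sH2 eH2]] := house (esym (etrans (vn2_ev p c') hc')) hr'.
have [d [hd dc]] := qunit_move (etrans hc (etrans h (esym hc'))).
set f := fun i : 'I_p.+1 => if i == ord0 then d else 1.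
have hf : forall i, f i * qconj (f i) = 1.
  by move=> i; rewrite /f; case: eqP => _ //; rewrite qconj1 mulr1.
exists (qadj H2 *m diag_mx (\row_i f i) *m H1); split.
  apply: Sp_mul; last exact: sH1.
  apply: Sp_mul; last exact: Sp_diag.
  by apply: Sp_adj; exact: Sp_left sH2.
rewrite -mulmxA eH1 -mulmxA.
have -> : diag_mx (\row_i f i) *m ev p c = ev p c'.
  rewrite mul_diag_mx; apply/matrixP => i j; rewrite !mxE /f.
  by case: eqP => _; rewrite ?mulr0 ?mul1r.
by rewrite -eH2 mulmxA (Sp_left sH2) mul1mx.
Qed.

End Trans.

Section KBlock.
Variable R : rcfType.
Local Notation Q := (quat R).
Variable n : nat.
Local Notation wd := (widen_ord (leqnSn n)).

Lemma qmul0 (x : Q) : 0 * x = 0. Proof. exact: mul0r. Qed.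
Lemma qmulr0 (x : Q) : x * 0 = 0. Proof. exact: mulr0. Qed.

Definition KB (B : 'M[Q]_n) (q : 'M[Q]_1) : 'M[Q]_n.+1 :=
  castmx (addn1 n, addn1 n) (block_mx B 0 0 q).

Lemma cast_wd i : cast_ord (esym (addn1 n)) (wd i) = lshift 1 i.
Proof. exact: val_inj. Qed.
Lemma cast_max : cast_ord (esym (addn1 n)) ord_max = rshift n ord0.
Proof. by apply: val_inj; rewrite /= addn0. Qed.

Lemma KB_ww B q i j : KB B q (wd i) (wd j) = B i j.
Proof. by rewrite /KB castmxE /= !cast_wd block_mxEul. Qed.
Lemma KB_wm B q i : KB B q (wd i) ord_max = 0.
Proof. by rewrite /KB castmxE /= cast_wd cast_max block_mxEur mxE. Qed.
Lemma KB_mw B q j : KB B q ord_max (wd j) = 0.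
Proof. by rewrite /KB castmxE /= cast_wd cast_max block_mxEdl mxE. Qed.
Lemma KB_mm B q : KB B q ord_max ord_max = q 0 0.
Proof. by rewrite /KB castmxE /= cast_max block_mxEdr. Qed.

Lemma ordS_case (i : 'I_n.+1) : i = ord_max \/ exists j, i = wd j.
Proof.
case: (ltnP i n) => h; first by right; exists (Ordinal h); apply: val_inj.
by left; apply: val_inj => /=; apply/eqP; rewrite eqn_leq h -ltnS ltn_ord.
Qed.

Lemma sumS (F : 'I_n.+1 -> Q) : \sum_j F j = \sum_(j < n) F (wd j) + F ord_max.
Proof. by rewrite big_ord_recr. Qed.

Lemma wd_eq i j : (wd i == wd j) = (i == j).
Proof. by apply/eqP/eqP => [/(congr1 val) /= /val_inj|->]. Qed.
Lemma wd_max i : (wd i == ord_max) = false.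
Proof. by apply/negbTE; rewrite -val_eqE /= neq_ltn ltn_ord. Qed.

Lemma one_ww i j : (1%:M : 'M[Q]_n.+1) (wd i) (wd j) = (i == j)%:R.
Proof. by rewrite mxE wd_eq. Qed.
Lemma one_wm i : (1%:M : 'M[Q]_n.+1) (wd i) ord_max = 0.
Proof. by rewrite mxE wd_max. Qed.
Lemma one_mw i : (1%:M : 'M[Q]_n.+1) ord_max (wd i) = 0.
Proof. by rewrite mxE eq_sym wd_max. Qed.
Lemma one_mm : (1%:M : 'M[Q]_n.+1) ord_max ord_max = 1.
Proof. by rewrite mxE eqxx. Qed.

Lemma KB_of (k : 'M[Q]_n.+1) : (forall i, k (wd i) ord_max = 0) ->
  (forall j, k ord_max (wd j) = 0) ->
  k = KB (\matrix_(i, j) k (wd i) (wd j)) (k ord_max ord_max)%:M.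
Proof.
move=> h1 h2; apply/matrixP => i j.
case: (ordS_case i) => [->|[i' ->]]; case: (ordS_case j) => [->|[j' ->]].
- by rewrite KB_mm mxE.
- by rewrite KB_mw h2.
- by rewrite KB_wm h1.
- by rewrite KB_ww mxE.
Qed.

Lemma KB_Sp B q : is_Sp (KB B q) -> is_Sp B /\ is_Sp q.
Proof.
rewrite /is_Sp => h; split; apply/matrixP => i j.
  move/matrixP: h => /(_ (wd i) (wd j)); rewrite one_ww !mxE sumS.
  rewrite KB_wm qmul0 addr0 => <-.
  by apply: eq_bigr => l _; rewrite !qadjE !KB_ww.
move/matrixP: h => /(_ ord_max ord_max); rewrite one_mm !mxE sumS.
rewrite big1; last by move=> l _; rewrite KB_mw qmul0.
rewrite add0r qadjE KB_mm !ord1 => <-.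
by rewrite big_ord1 qadjE eqxx mulr1n.
Qed.

Lemma Sp1_unit (q : 'M[Q]_1) : is_Sp q -> q 0 0 * qconj (q 0 0) = 1.
Proof.
move/matrixP/(_ 0 0); rewrite !mxE big_ord1 qadjE mulr1n //.
Qed.

Lemma Sp1_of (x : Q) : x * qconj x = 1 -> is_Sp (x%:M : 'M[Q]_1).
Proof.
move=> h; rewrite /is_Sp qadj_scalar -scalar_mxM h //.
Qed.

Lemma KB_Sp_of B q : is_Sp B -> is_Sp q -> is_Sp (KB B q).
Proof.
rewrite /is_Sp => hB hq; apply/matrixP => i j; rewrite !mxE sumS.
case: (ordS_case i) => [->|[i' ->]]; case: (ordS_case j) => [->|[j' ->]].
- rewrite big1; last by move=> l _; rewrite KB_mw qmul0.
  rewrite add0r qadjE !KB_mm eqxx.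
  by move/matrixP: hq => /(_ 0 0); rewrite !mxE big_ord1 qadjE.
- rewrite big1; last by move=> l _; rewrite KB_mw qmul0.
  by rewrite add0r qadjE KB_wm qconj0 qmulr0 eq_sym wd_max.
- by rewrite qadjE KB_wm qmul0 addr0 wd_max big1 // => l _; rewrite qadjE KB_mw qconj0 qmulr0.
- rewrite qadjE !KB_wm qconj0 qmulr0 addr0 wd_eq.
  move/matrixP: hB => /(_ i' j'); rewrite !mxE => <-.
  by apply: eq_bigr => l _; rewrite !qadjE !KB_ww.
Qed.

Definition Pw (v : 'cV[Q]_n.+1) : 'cV[Q]_n := \col_i v (wd i) 0.

Lemma KB_mulv_w B q (v : 'cV[Q]_n.+1) i :
  (KB B q *m v) (wd i) 0 = (B *m Pw v) i 0.
Proof.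
rewrite !mxE sumS KB_wm qmul0 addr0.
by apply: eq_bigr => l _; rewrite KB_ww mxE.
Qed.

Lemma KB_mulv_m B q (v : 'cV[Q]_n.+1) :
  (KB B q *m v) ord_max 0 = q 0 0 * v ord_max 0.
Proof.
rewrite !mxE sumS KB_mm big1 ?add0r // => l _; rewrite KB_mw qmul0 //.
Qed.

End KBlock.

Section NBlock.
Variable R : rcfType.
Local Notation Q := (quat R).
Variable m : nat.
Local Notation w1 := (widen_ord (leqnSn m.+1)).
Local Notation w2 := (widen_ord (leqnSn m.+2)).

Lemma NB_KB (e : (m.+1 + 1 + 1 = m.+3)%N) (A : 'M[Q]_m.+1) (q1 q2 : 'M[Q]_1) :
  castmx (e, e) (block_mx (block_mx A 0 0 q1) 0 0 q2) = KB (KB A q1) q2.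
Proof.
have c1 i : cast_ord (esym e) (w2 (w1 i)) = lshift 1 (lshift 1 i) by apply: val_inj.
have c2 : cast_ord (esym e) (w2 ord_max) = lshift 1 (rshift m.+1 (0 : 'I_1)).
  by apply: val_inj; rewrite /= addn0.
have c3 : cast_ord (esym e) ord_max = rshift (m.+1 + 1) (0 : 'I_1).
  by apply: val_inj; rewrite /= addn0 addn1.
apply/matrixP => i j; rewrite castmxE.
case: (ordS_case i) => [->|[i' ->]]; [|case: (ordS_case i') => [->|[i'' ->]]];
(case: (ordS_case j) => [->|[j' ->]]; [|case: (ordS_case j') => [->|[j'' ->]]]);
rewrite ?c1 ?c2 ?c3 ?block_mxEul ?block_mxEur ?block_mxEdl ?block_mxEdr
  ?KB_ww ?KB_wm ?KB_mw ?KB_mm ?block_mxEul ?block_mxEur ?block_mxEdl ?block_mxEdr ?mxE //.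
Qed.

Lemma le13 : (m.+1 <= m.+3)%N. Proof. exact: leqW (leqnSn _). Qed.

Lemma norm_v0E (g : 'M[Q]_m.+3) :
  norm_v0 g = Num.sqrt (vn2 (Pw (Pw (vlast g)))).
Proof.
rewrite /norm_v0 /= (big_ord_narrow le13) /vn2; congr (Num.sqrt _).
apply: eq_bigr => i _; rewrite qabs2 !mxE; congr (qnorm2 (g _ _)).
exact: val_inj.
Qed.

Lemma norm_vnE (g : 'M[Q]_m.+3) :
  norm_vn g = qabs (vlast g (w2 ord_max) 0).
Proof.
rewrite /norm_vn /=; congr (qabs (vlast g _ 0)).
by apply: val_inj; rewrite /= inordK.
Qed.

End NBlock.

Lemma colmulE (R : rcfType) n p q (A : 'M[quat R]_(n,p)) (B : 'M[quat R]_(p,q)) i j :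
  (A *m B) i j = (A *m col j B) i 0.
Proof. by rewrite !mxE; apply: eq_bigr => l _; rewrite !mxE. Qed.

Lemma mul_adjKB_last (R : rcfType) n (M : 'M[quat R]_n.+1) B q i :
  (M *m qadj (KB B q)) i ord_max = M i ord_max * qconj (q 0 0).
Proof.
rewrite mxE sumS qadjE KB_mm big1 ?add0r // => l _.
by rewrite qadjE KB_mw qconj0 qmulr0.
Qed.

Lemma qnorm2_unit (R : rcfType) (c a : quat R) : c * qconj c = 1 ->
  qnorm2 (a * qconj c) = qnorm2 a.
Proof.
move=> h; have : qnorm2 c = 1 by apply: qr_inj; rewrite -qmul_conj h.
by rewrite qnorm2M qnorm2_conj => ->; rewrite mulr1.
Qed.


Lemma col_mulmx (R : rcfType) n p q (A : 'M[quat R]_(n,p)) (B : 'M[quat R]_(p,q)) j :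
  col j (A *m B) = A *m col j B.
Proof. by apply/matrixP => i l; rewrite !mxE; apply: eq_bigr => k _; rewrite !mxE. Qed.

Lemma Sp1_norm (R : rcfType) (q : 'M[quat R]_1) : is_Sp q -> qnorm2 (q 0 0) = 1.
Proof. by move/Sp1_unit => h; apply: qr_inj; rewrite -qmul_conj h. Qed.

Lemma PwE (R : rcfType) n (v : 'cV[quat R]_n.+1) i : Pw v i 0 = v (widen_ord (leqnSn n) i) 0.
Proof. by rewrite mxE. Qed.

Theorem proposition2p5 (R : realType) (n : nat) (hn : (2 <= n)%N)
    (g1 g2 h1 h2 : 'M[quat R]_n.+1) :
  is_Sp g1 -> is_Sp g2 -> is_Sp h1 -> is_Sp h2 ->
  (same_orbit (g1, g2) (h1, h2) <->
   [/\ norm_v0 (qadj g2 *m g1) = norm_v0 (qadj h2 *m h1),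
       norm_vn (qadj g2 *m g1) = norm_vn (qadj h2 *m h1) &
       norm_vlast (qadj g2 *m g1) = norm_vlast (qadj h2 *m h1)]).
Proof.
case: n hn g1 g2 h1 h2 => [|[|m]] // _ g1 g2 h1 h2 sg1 sg2 sh1 sh2.
rewrite !norm_v0E !norm_vnE /norm_vlast.
have sX : is_Sp (qadj g2 *m g1) := Sp_mul (Sp_adj (Sp_left sg2)) sg1.
have sY : is_Sp (qadj h2 *m h1) := Sp_mul (Sp_adj (Sp_left sh2)) sh1.
split.
- case=> g [k [h [sg [[B [q [sB [sq ek]]]] [[e [A [q1 [q2 [sA [sq1 [sq2 eh]]]]]]] [/= e1 e2]]]]]].
  have ek' : k = KB B q := ek.
  rewrite NB_KB in eh.
  have eY : qadj h2 *m h1 = h *m (qadj g2 *m g1) *m qadj k.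
    rewrite e1 e2 !qadj_mul !qadjK.
    have -> : h *m (qadj g2 *m qadj g) *m (g *m g1 *m qadj k)
        = h *m (qadj g2 *m (qadj g *m g) *m g1) *m qadj k by rewrite !mulmxA.
    by rewrite (Sp_left sg) mulmx1 !mulmxA.
  have yE i : vlast (qadj h2 *m h1) i 0
      = (h *m vlast (qadj g2 *m g1)) i 0 * qconj (q 0 0).
    rewrite eY ek' /vlast mxE mul_adjKB_last [(h *m _) _ ord_max]colmulE //.
  have hq := Sp1_unit sq.
  split.
  + congr (Num.sqrt _); rewrite /vn2.
    have -> : \sum_i qnorm2 (Pw (Pw (vlast (qadj h2 *m h1))) i 0)
        = \sum_i qnorm2 ((A *m Pw (Pw (vlast (qadj g2 *m g1)))) i 0).
      apply: eq_bigr => i _; rewrite !PwE yE.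
      by rewrite qnorm2_unit // eh !KB_mulv_w.
    by have := vn2_unitary (Pw (Pw (vlast (qadj g2 *m g1)))) (Sp_left sA); rewrite /vn2 => ->.
  + rewrite /qabs yE qnorm2_unit // eh KB_mulv_w KB_mulv_m qnorm2M Sp1_norm // mul1r.
    by rewrite PwE.
  + by rewrite /qabs yE qnorm2_unit // eh KB_mulv_m qnorm2M Sp1_norm // mul1r.
- case=> E0 E1 E2.
  have F0 : vn2 (Pw (Pw (vlast (qadj g2 *m g1)))) = vn2 (Pw (Pw (vlast (qadj h2 *m h1)))).
    by apply/eqP; rewrite -eqr_sqrt ?vn2_ge0 // E0.
  have F1 := qabs_eq E1.
  have F2 := qabs_eq E2.
  have [A [sA eA]] := trans_vec F0.
  have [d1 [hd1 ed1]] := qunit_move F1.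
  have [d2 [hd2 ed2]] := qunit_move F2.
  pose hh := KB (KB A d1%:M) d2%:M.
  have shh : is_Sp hh := KB_Sp_of (KB_Sp_of sA (Sp1_of hd1)) (Sp1_of hd2).
  have ehx : hh *m col ord_max (qadj g2 *m g1) = col ord_max (qadj h2 *m h1).
    apply/matrixP => i j; rewrite ord1.
    case: (ordS_case i) => [->|[i' ->]].
      by rewrite KB_mulv_m mxE eqxx mulr1n ed2.
    rewrite KB_mulv_w; case: (ordS_case i') => [->|[i'' ->]].
      by rewrite KB_mulv_m mxE eqxx mulr1n PwE ed1.
    by rewrite KB_mulv_w eA !PwE.
  pose P := hh *m (qadj g2 *m g1).
  have sP : is_Sp P := Sp_mul shh sX.
  pose k := qadj (qadj h2 *m h1) *m P.
  have sk : is_Sp k := Sp_mul (Sp_adj (Sp_left sY)) sP.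
  have kcol i : k i ord_max = (1%:M : 'M_(m.+3)) i ord_max.
    rewrite /k colmulE col_mulmx ehx -colmulE (Sp_left sY) //.
  have kmm : k ord_max ord_max = 1 by rewrite kcol one_mm.
  have kwm i : k (widen_ord (leqnSn m.+2) i) ord_max = 0 by rewrite kcol one_wm.
  have kmw j : k ord_max (widen_ord (leqnSn m.+2) j) = 0.
    move/matrixP: (sk) => /(_ ord_max ord_max); rewrite one_mm mxE.
    under eq_bigr do rewrite qadjE qmul_conj.
    rewrite -qr_sum -qr1 => /qr_inj; rewrite big_ord_recr /= kmm qnorm2_1.
    move/(congr1 (fun x => x - 1)); rewrite addrK subrr => hs.
    apply: qnorm2_eq0; exact: (psumr_eq0P (fun l _ => qnorm2_ge0 _) hs).
  have ekK := KB_of kwm kmw.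
  have [sB sq] : is_Sp (\matrix_(i, j) k (widen_ord (leqnSn m.+2) i) (widen_ord (leqnSn m.+2) j))
      /\ is_Sp ((k ord_max ord_max)%:M : 'M_1).
    by apply: KB_Sp; rewrite -ekK.
  exists (h2 *m hh *m qadj g2), k, hh; split.
    by apply: Sp_mul; [exact: Sp_mul sh2 shh | exact: Sp_adj (Sp_left sg2)].
  split.
    by exists (\matrix_(i, j) k (widen_ord (leqnSn m.+2) i) (widen_ord (leqnSn m.+2) j)),
      ((k ord_max ord_max)%:M).
  split.
    have e : ((m.+2).-1 + 1 + 1 = (m.+2).+1)%N by rewrite !addn1.
    exists e, A, d1%:M, d2%:M; split; first exact: sA.
    split; first exact: Sp1_of hd1.
    split; first exact: Sp1_of hd2.
    by rewrite NB_KB.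
  split => /=.
    have -> : h2 *m hh *m qadj g2 *m g1 *m qadj k = h2 *m (P *m qadj P) *m (qadj h2 *m h1).
      by rewrite /k qadj_mul qadjK /P !mulmxA.
    by rewrite sP mulmx1 mulmxA sh2 mul1mx.
  have -> : h2 *m hh *m qadj g2 *m g2 *m qadj hh = h2 *m (hh *m (qadj g2 *m g2) *m qadj hh).
    by rewrite !mulmxA.
  by rewrite (Sp_left sg2) mulmx1 shh mulmx1.
Qed.
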